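(* Let $n>2$ and $q>0$ be integers such that $n$ is even or $q$ is odd, and let $p>\max\{n,(q-1)n+1\}$ be a prime. Then $$ \sum_{k=0}^{p-q}\frac{(q)_k^n}{(1)_k^n}\left(H_k^{(1)}-H_{q+k-1}^{(1)}\right)\equiv0\pmod{p} $$ and $$ \sum_{k=0}^{p-q}\frac{(q)_k^n}{(1)_k^n}\left((H_k^{(1)})^2-(H_{q+k-1}^{(1)})^2\right)\equiv0\pmod{p}. $$
   Context: $(x)_k$ denotes the Pochhammer symbol: $(x)_0=1$ and $(x)_k=x(x+1)\cdots(x+k-1)$ for $k>0$. $H_k^{(1)}=\sum_{j=1}^k 1/j$ is the $k$th harmonic number (with $H_0^{(1)}=0$). A congruence between rational numbers modulo $p^m$ means their difference lies in $p^m\mathbb{Z}_{(p)}$, where $\mathbb{Z}_{(p)}$ is the ring of rationals whose denominators are coprime to $p$. *)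

(* Defs.v *)
From mathcomp Require Import all_boot all_order all_algebra.
Set Implicit Arguments. Unset Strict Implicit. Unset Printing Implicit Defensive.
Import Order.TTheory GRing.Theory Num.Theory.
Local Open Scope ring_scope.

Definition poch (x : rat) (k : nat) : rat := \prod_(i < k) (x + i%:R).

Definition harm (k : nat) : rat := \sum_(1 <= j < k.+1) (j%:R)^-1.

(* x lies in p^m Z_(p): denominator coprime to p and p^m divides numerator. *)
Definition in_pZp (p m : nat) (x : rat) : Prop :=
  coprime p `|denq x|%N /\ ((p ^ m)%:Z %| numq x)%Z.

Definition rat_cong (p m : nat) (a b : rat) : Prop := in_pZp p m (a - b).

(* Main.v *)
Require Import Defs.
From mathcomp Require Import all_boot all_order all_algebra.
From mathcomp Require Import zify ring.
Set Implicit Arguments. Unset Strict Implicit. Unset Printing Implicit Defensive.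
Import Order.TTheory GRing.Theory Num.Theory.
Local Open Scope ring_scope.

Definition phi (p : nat) (x : rat) : 'F_p := (numq x)%:~R / (denq x)%:~R.
Definition pint (p : nat) (x : rat) : bool := ((denq x)%:~R : 'F_p) != 0.

Lemma Fp_int_eq0 p (pr : prime p) (z : int) :
  ((z%:~R : 'F_p) == 0) = (p %| `|z|)%N.
Proof.
have ch := pchar_Fp pr.
case: z => n.
  by rewrite /= (dvdn_pcharf ch).
by rewrite NegzE mulrNz oppr_eq0 /= (dvdn_pcharf ch).
Qed.

Lemma phiL p (pr : prime p) x (a d : int) :
  x * d%:~R = a%:~R -> (d%:~R : 'F_p) != 0 ->
  pint p x /\ phi p x = a%:~R / d%:~R.
Proof.
move=> hx hd.
have e1 : (a * denq x = numq x * d)%R.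
  apply: (@intr_inj rat); rewrite !intrM numqE -hx; ring.
have hm : (denq x %| d)%Z.
  rewrite -(Gauss_dvdzr _ (_ : coprimez (denq x) (numq x))); last first.
    by rewrite coprimezE coprime_sym coprime_num_den.
  by rewrite -e1 dvdz_mull.
have hm0 : pint p x.
  apply: contra hd => /eqP h0.
  case/dvdzP: hm => e ->. by rewrite intrM h0 mulr0.
split => //.
rewrite /phi.
apply/eqP; rewrite eqr_div //.
by rewrite -!intrM e1 mulrC.
Qed.

Lemma phiD p (pr : prime p) x y : pint p x -> pint p y ->
  pint p (x + y) /\ phi p (x + y) = phi p x + phi p y.
Proof.
move=> hx hy.
have e0 : (x + y) * ((denq x * denq y))%:~R = ((numq x * denq y + numq y * denq x))%:~R :> rat.
  by rewrite !intrD !intrM !numqE; ring.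
have d0 : (((denq x * denq y))%:~R : 'F_p) != 0.
  by rewrite intrM mulf_neq0.
have [h1 h2] := @phiL p pr _ _ _ e0 d0.
split => //; rewrite h2 /phi intrD !intrM.
rewrite /pint in hx hy; by field; rewrite hx hy.
Qed.

Lemma phiM p (pr : prime p) x y : pint p x -> pint p y ->
  pint p (x * y) /\ phi p (x * y) = phi p x * phi p y.
Proof.
move=> hx hy.
have e0 : (x * y) * ((denq x * denq y))%:~R = ((numq x * numq y))%:~R :> rat.
  by rewrite !intrM !numqE; ring.
have d0 : (((denq x * denq y))%:~R : 'F_p) != 0.
  by rewrite intrM mulf_neq0.
have [h1 h2] := @phiL p pr _ _ _ e0 d0.
split => //; rewrite h2 /phi !intrM.
rewrite /pint in hx hy; by field; rewrite hx hy.
Qed.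

Lemma phiN p (pr : prime p) x : pint p x ->
  pint p (- x) /\ phi p (- x) = - phi p x.
Proof.
move=> hx.
have e0 : (- x) * ((denq x))%:~R = ((- numq x))%:~R :> rat.
  by rewrite intrN numqE; ring.
have d0 : (((denq x))%:~R : 'F_p) != 0.
  by [].
have [h1 h2] := @phiL p pr _ _ _ e0 d0.
split => //; rewrite h2 /phi intrN; by field.
Qed.

Lemma phiB p (pr : prime p) x y : pint p x -> pint p y ->
  pint p (x - y) /\ phi p (x - y) = phi p x - phi p y.
Proof.
move=> hx hy; have [h1 h2] := phiN pr hy.
have [h3 h4] := phiD pr hx h1. by rewrite h4 h2.
Qed.

Lemma phi_nat p (pr : prime p) (n : nat) : pint p n%:R /\ phi p n%:R = n%:R.
Proof.
have e0 : (n%:R) * (1)%:~R = (n)%:~R :> rat.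
  by rewrite mulr1.
have d0 : ((1)%:~R : 'F_p) != 0.
  by rewrite oner_neq0.
have [h1 h2] := @phiL p pr _ _ _ e0 d0.
by split => //; rewrite h2 divr1.
Qed.

Lemma phiV p (pr : prime p) (n : nat) : (n%:R : 'F_p) != 0 ->
  pint p (n%:R)^-1 /\ phi p (n%:R)^-1 = (n%:R)^-1.
Proof.
move=> hn.
have n0 : (n%:R : rat) != 0.
  apply: contra hn; rewrite pnatr_eq0 => /eqP ->; by [].
have e0 : ((n%:R)^-1) * (n)%:~R = (1)%:~R :> rat.
  by rewrite mulVf.
have d0 : ((n)%:~R : 'F_p) != 0.
  by [].
have [h1 h2] := @phiL p pr _ _ _ e0 d0.
by split => //; rewrite h2 div1r.
Qed.

Lemma phiX p (pr : prime p) x (n : nat) : pint p x ->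
  pint p (x ^+ n) /\ phi p (x ^+ n) = phi p x ^+ n.
Proof.
move=> hx; elim: n => [|n [ih1 ih2]].
  by rewrite !expr0; apply: (phi_nat pr 1).
have [h1 h2] := phiM pr ih1 hx.
by rewrite !exprSr h2 ih2.
Qed.

Lemma phi_sum p (pr : prime p) (I : eqType) (r : seq I) (P : pred I) (F : I -> rat) :
  (forall i, i \in r -> P i -> pint p (F i)) ->
  pint p (\sum_(i <- r | P i) F i) /\
  phi p (\sum_(i <- r | P i) F i) = \sum_(i <- r | P i) phi p (F i).
Proof.
elim: r => [|a r ih] hF.
  by rewrite !big_nil; apply: (phi_nat pr 0).
have [ih1 ih2] : pint p (\sum_(i <- r | P i) F i) /\
  phi p (\sum_(i <- r | P i) F i) = \sum_(i <- r | P i) phi p (F i).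
  by apply: ih => i ir; apply: hF; rewrite inE ir orbT.
rewrite !big_cons; case: ifP => // Pa.
have [h1 h2] := phiD pr (hF a (mem_head _ _) Pa) ih1.
by rewrite h2 ih2.
Qed.

Lemma Fp_nat_neq0 p (pr : prime p) j : (0 < j < p)%N -> (j%:R : 'F_p) != 0.
Proof.
case/andP => j0 jp.
rewrite -(dvdn_pcharf (pchar_Fp pr)); apply/negP => /(dvdn_leq j0).
by rewrite leqNgt jp.
Qed.

Lemma Fp_sum_p p (pr : prime p) a b : (a + b)%N = p -> (a%:R : 'F_p) = - b%:R.
Proof.
move=> e; apply/eqP; rewrite -subr_eq0 opprK -natrD e.
by rewrite (pchar_Fp_0 pr).
Qed.

Lemma Fp_two p (pr : prime p) : (2 < p)%N -> (2%:R : 'F_p) != 0.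
Proof. by move=> h; apply: Fp_nat_neq0. Qed.

Lemma Fp_antisym p (pr : prime p) (p2 : (2 < p)%N) N (T : nat -> 'F_p) :
  (forall k, (k <= N)%N -> T (N - k)%N = - T k) -> \sum_(0 <= k < N.+1) T k = 0.
Proof.
move=> hT.
have e : \sum_(0 <= k < N.+1) T k = - \sum_(0 <= k < N.+1) T k.
  rewrite {1}big_nat_rev /= -sumrN big_nat_cond [RHS]big_nat_cond.
  apply: eq_bigr => k /andP [/andP [_ kN] _].
  by rewrite add0n subSS hT.
have : 2%:R * \sum_(0 <= k < N.+1) T k = 0.
  by rewrite mulr2n mulrDl mul1r {1}e addNr.
by move/eqP; rewrite mulf_eq0 (negbTE (Fp_two pr p2)) /= => /eqP.
Qed.

Definition hF p (k : nat) : 'F_p := \sum_(1 <= j < k.+1) (j%:R)^-1.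

Lemma hF_S p m : hF p m.+1 = hF p m + (m.+1%:R)^-1.
Proof. by rewrite /hF big_nat_recr. Qed.

Lemma hF_pm1 p (pr : prime p) (p2 : (2 < p)%N) : hF p p.-1 = 0.
Proof.
have p0 : (0 < p)%N by apply: prime_gt0.
have e : hF p p.-1 = - hF p p.-1.
  rewrite /hF prednK // {1}big_nat_rev /= -sumrN big_nat_cond [RHS]big_nat_cond.
  apply: eq_bigr => j /andP [/andP [j1 jp] _].
  rewrite add1n subSS (Fp_sum_p pr (_ : ((p - j) + j = p)%N)) ?invrN //.
  by rewrite subnK // ltnW.
have : 2%:R * hF p p.-1 = 0.
  by rewrite mulr2n mulrDl mul1r {1}e addNr.
by move/eqP; rewrite mulf_eq0 (negbTE (Fp_two pr p2)) /= => /eqP.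
Qed.

Lemma hF_sym p (pr : prime p) (p2 : (2 < p)%N) k : (k < p)%N -> hF p (p.-1 - k) = hF p k.
Proof.
have p0 : (0 < p)%N by apply: prime_gt0.
elim: k => [|k ih] hk; first by rewrite subn0 hF_pm1 // /hF big_geq.
have e1 : (p.-1 - k = (p.-1 - k.+1).+1)%N.
  rewrite subnS prednK // subn_gt0 -ltnS prednK //.
have := ih (ltnW hk); rewrite e1 hF_S -e1 => ih'.
rewrite hF_S -ih' (Fp_sum_p pr (_ : ((p.-1 - k) + k.+1 = p)%N)) ?invrN ?addrNK //.
lia.
Qed.

Lemma fact_prodL a m : (a`! * \prod_(j < m) (a + 1 + j) = (a + m)`!)%N.
Proof.
elim: m => [|m ih]; first by rewrite big_ord0 muln1 addn0.
rewrite big_ord_recr /= mulnA ih.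
by rewrite (addnS a m) factS mulnC addn1 addSn.
Qed.

Definition Uq q k := (\prod_(i < k) (q + i))%N.
Definition wq q k := (\prod_(j < q.-1) (k + 1 + j))%N.

Lemma Uw q k : (0 < q)%N -> (q.-1`! * Uq q k = k`! * wq q k)%N.
Proof.
move=> q0; rewrite /wq fact_prodL /Uq.
have -> : (\prod_(i < k) (q + i) = \prod_(i < k) (q.-1 + 1 + i))%N.
  by apply: eq_bigr => i _; rewrite addn1 prednK.
by rewrite fact_prodL addnC.
Qed.

Lemma Fp_fact_neq0 p (pr : prime p) k : (k < p)%N -> (k`!%:R : 'F_p) != 0.
Proof.
elim: k => [|k ih] hk; first by rewrite oner_neq0.
by rewrite factS natrM mulf_neq0 ?ih ?(ltnW hk) // Fp_nat_neq0.
Qed.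

Lemma Gw p (pr : prime p) q k : (0 < q)%N -> (k < p)%N -> (q.-1 < p)%N ->
  ((Uq q k)%:R / (k`!)%:R : 'F_p) = (wq q k)%:R / (q.-1`!)%:R.
Proof.
move=> q0 kp qp.
have h1 := Fp_fact_neq0 pr kp; have h2 := Fp_fact_neq0 pr qp.
apply/eqP; rewrite eqr_div // -!natrM.
by rewrite mulnC Uw // mulnC.
Qed.

Lemma prod_neg (R : comRingType) m (F : nat -> R) :
  \prod_(0 <= j < m) - F j = (-1) ^+ m * \prod_(0 <= j < m) F j.
Proof.
elim: m => [|m ih]; first by rewrite !big_geq // expr0 mul1r.
rewrite !big_nat_recr //= ih exprS; ring.
Qed.

Lemma w_sym p (pr : prime p) q N k : (0 < q)%N -> (N + q)%N = p -> (k <= N)%N ->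
  ((wq q (N - k))%:R : 'F_p) = (-1) ^+ q.-1 * (wq q k)%:R.
Proof.
move=> q0 e kN.
rewrite /wq !natr_prod -!(big_mkord xpredT (fun j => ((_ + 1 + j)%:R : 'F_p))).
rewrite big_nat_rev /= -prod_neg big_nat_cond [RHS]big_nat_cond.
apply: eq_bigr => j /andP [/andP [_ jq] _].
rewrite (@Fp_sum_p p pr _ (k + 1 + j)) //; lia.
Qed.

Lemma poch_q q k : poch q%:R k = (Uq q k)%:R.
Proof. by rewrite /poch /Uq natr_prod; apply: eq_bigr => i _; rewrite natrD. Qed.

Lemma poch_1 k : poch 1 k = (k`!)%:R.
Proof.
elim: k => [|k ih]; first by rewrite /poch big_ord0.
by rewrite /poch big_ord_recr /= -/(poch 1 k) ih factS natrM mulrC -natr1 addrC.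
Qed.

Lemma phi_harm p (pr : prime p) k : (k < p)%N -> pint p (harm k) /\ phi p (harm k) = hF p k.
Proof.
move=> kp; rewrite /harm /hF.
have hj : forall j, j \in index_iota 1 k.+1 -> true ->
    pint p (j%:R)^-1 /\ phi p (j%:R)^-1 = (j%:R)^-1.
  move=> j; rewrite mem_index_iota => /andP [j1 jk] _.
  apply: (@phiV p pr j); apply: (@Fp_nat_neq0 p pr j); rewrite j1 /=; exact: leq_trans kp.
have [h1 h2] := @phi_sum p pr _ (index_iota 1 k.+1) xpredT (fun j => (j%:R)^-1)
  (fun j jr t => (hj j jr t).1).
split => //; rewrite h2 big_seq_cond [RHS]big_seq_cond.
by apply: eq_bigr => j /andP [jr _]; rewrite (hj j jr isT).2.
Qed.

Lemma rat_cong0 p (pr : prime p) x : pint p x -> phi p x = 0 -> rat_cong p 1 x 0.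
Proof.
rewrite /rat_cong /in_pZp subr0 /pint /phi => h1 /eqP.
rewrite mulf_eq0 invr_eq0 (negbTE h1) orbF => h2.
by rewrite prime_coprime // -Fp_int_eq0 // h1 expn1 dvdzE /= -Fp_int_eq0.
Qed.

Lemma main_gen n q p (E : rat -> rat) (e : 'F_p -> 'F_p) :
  (2 < n)%N -> (0 < q)%N -> (~~ odd n || odd q) ->
  prime p -> (maxn n ((q - 1) * n + 1) < p)%N ->
  (forall x, pint p x -> pint p (E x) /\ phi p (E x) = e (phi p x)) ->
  rat_cong p 1
    (\sum_(0 <= k < (p - q).+1)
        (poch q%:R k ^+ n / poch 1 k ^+ n) * (E (harm k) - E (harm (q + k - 1)))) 0.
Proof.
move=> n2 q0 par pr hp hE.
have np : (n < p)%N by apply: leq_ltn_trans hp; apply: leq_maxl.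
have qn : ((q - 1) * n + 1 < p)%N by apply: leq_ltn_trans hp; apply: leq_maxr.
have q1n : ((q - 1) * 1 <= (q - 1) * n)%N by apply: leq_mul => //; lia.
have p2 : (2 < p)%N by lia.
have qp : (q < p)%N by lia.
set N := (p - q)%N.
have NQ : (N + q = p)%N by rewrite /N; lia.
pose G k : 'F_p := (Uq q k)%:R / (k`!)%:R.
pose T k : 'F_p := G k ^+ n * (e (hF p k) - e (hF p (q + k - 1))).
have hT : forall k, k \in index_iota 0 N.+1 -> true ->
   pint p ((poch q%:R k ^+ n / poch 1 k ^+ n) * (E (harm k) - E (harm (q + k - 1))))
   /\ phi p ((poch q%:R k ^+ n / poch 1 k ^+ n) * (E (harm k) - E (harm (q + k - 1)))) = T k.
  move=> k; rewrite mem_index_iota => /andP [_ kN] _.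
  have kp : (k < p)%N by lia.
  have kp' : (q + k - 1 < p)%N by lia.
  have [a1 a2] := phi_harm pr kp.
  have [b1 b2] := phi_harm pr kp'.
  have [c1 c2] := hE _ a1.
  have [d1 d2] := hE _ b1.
  have [f1 f2] := phiB pr c1 d1.
  have [g1 g2] := phiX pr n (phi_nat pr (Uq q k)).1.
  have fk : ((k`! ^ n)%:R : 'F_p) != 0 by rewrite natrX expf_neq0 // Fp_fact_neq0.
  have [i1 i2] := phiV pr fk.
  rewrite poch_q poch_1 -(natrX _ (k`!)).
  have [j1 j2] := phiM pr g1 i1.
  have [k1 k2] := phiM pr j1 f1.
  split => //.
  rewrite k2 j2 g2 i2 f2 c2 d2 a2 b2 (phi_nat pr _).2 /T /G natrX exprMn exprVn.
  by [].
have [s1 s2] := @phi_sum p pr _ (index_iota 0 N.+1) (fun _ => true)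
  (fun k => (poch q%:R k ^+ n / poch 1 k ^+ n) * (E (harm k) - E (harm (q + k - 1))))
  (fun k kr t => (hT k kr t).1).
apply: (rat_cong0 pr s1).
rewrite s2 big_seq_cond.
rewrite (eq_bigr T); last by move=> k /andP [kr _]; rewrite (hT k kr isT).2.
rewrite -big_seq_cond.
apply: (Fp_antisym pr p2) => k kN.
have GS : G (N - k)%N ^+ n = G k ^+ n.
  have h1 : (N - k < p)%N by clear -NQ kN qp q0; lia.
  have h2 : (k < p)%N by clear -NQ kN qp q0; lia.
  have h3 : (q.-1 < p)%N by clear -qp; lia.
  rewrite /G (Gw pr q0 h1 h3) (Gw pr q0 h2 h3).
  rewrite (w_sym pr q0 NQ kN) -mulrA exprMn -exprM -signr_odd oddM.
  have -> : (odd q.-1 && odd n) = false.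
    have hq : forall q', (0 < q')%N -> (~~ odd n || odd q') -> (odd q'.-1 && odd n) = false.
      by case=> [|q'] //= _; case: (odd n); case: (odd q').
    exact: hq.
  by rewrite expr0 mul1r.
rewrite /T GS.
have -> : (N - k = p.-1 - (q + k - 1))%N by lia.
rewrite hF_sym //; last by lia.
have -> : (q + (p.-1 - (q + k - 1)) - 1 = p.-1 - k)%N by lia.
rewrite hF_sym //; last by lia.
by rewrite -mulrN opprB.
Qed.

Theorem lemma3p1 (n q p : nat) :
  (2 < n)%N -> (0 < q)%N -> (~~ odd n || odd q) ->
  prime p -> (maxn n ((q - 1) * n + 1) < p)%N ->
  rat_cong p 1
    (\sum_(0 <= k < (p - q).+1)
        (poch q%:R k ^+ n / poch 1 k ^+ n) * (harm k - harm (q + k - 1))) 0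
  /\
  rat_cong p 1
    (\sum_(0 <= k < (p - q).+1)
        (poch q%:R k ^+ n / poch 1 k ^+ n) * (harm k ^+ 2 - harm (q + k - 1) ^+ 2)) 0.
Proof.
move=> n2 q0 par pr hp; split.
  apply: (@main_gen n q p (fun x => x) (fun x => x)) => // x hx; by split.
apply: (@main_gen n q p (fun x => x ^+ 2) (fun x => x ^+ 2)) => // x hx.
exact: (@phiX p pr x 2 hx).
Qed.
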